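(* Let $F$ be a Banach lattice and $E\subset F$ a closed subspace such that every uo-null sequence in $E$ is norm-null. Then $E$ is dispersed.
   Context: A net $(x_\alpha)$ in $F$ order converges to $0$ if there is a net $(g_\beta)$ with $g_\beta\downarrow0$ such that for every $\beta$ there is $\alpha_0$ with $|x_\alpha|\le g_\beta$ for $\alpha\ge\alpha_0$; $(x_\alpha)$ is uo-null if $|x_\alpha|\wedge h$ order converges to $0$ for every $h\in F_+$. A closed subspace $E$ is dispersed if there is no sequence of unit vectors $(e_n)\subset E$ and disjoint sequence $(f_n)\subset F$ ($|f_n|\wedge|f_m|=0$, $n\ne m$) with $\|e_n-f_n\|\to0$. *)

(* Defs.v *)
From HB Require Import structures.
From mathcomp Require Import all_boot all_order all_algebra.
From mathcomp Require Import all_classical all_reals all_analysis.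
Set Implicit Arguments. Unset Strict Implicit. Unset Printing Implicit Defensive.
Import Order.TTheory GRing.Theory Num.Theory.
Import numFieldNormedType.Exports.
Local Open Scope classical_set_scope.
Local Open Scope ring_scope.

Section BL.
Variables (R : realType) (F : completeNormedModType R).
Variables (le : F -> F -> Prop) (join : F -> F -> F).

Definition labs (x : F) : F := join x (- x).
Definition lmeet (x y : F) : F := - join (- x) (- y).

Record banach_lattice : Prop := {
  bl_refl : forall x, le x x;
  bl_trans : forall x y z, le x y -> le y z -> le x z;
  bl_antisym : forall x y, le x y -> le y x -> x = y;
  bl_add : forall x y z, le x y -> le (x + z) (y + z);
  bl_scale : forall (a : R) x y, 0 <= a -> le x y -> le (a *: x) (a *: y);
  bl_join_l : forall x y, le x (join x y);
  bl_join_r : forall x y, le y (join x y);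
  bl_join_lub : forall x y z, le x z -> le y z -> le (join x y) z;
  bl_norm : forall x y, le (labs x) (labs y) -> `|x| <= `|y|
}.

Definition directed (B : Type) (leB : B -> B -> Prop) : Prop :=
  (forall b, leB b b) /\ (forall a b c, leB a b -> leB b c -> leB a c) /\
  inhabited B /\ (forall a b, exists c, leB a c /\ leB b c).

Definition net_decr_to0 (B : Type) (leB : B -> B -> Prop) (g : B -> F) : Prop :=
  (forall b b', leB b b' -> le (g b') (g b)) /\
  (forall b, le 0 (g b)) /\
  (forall h, (forall b, le h (g b)) -> le h 0).

Definition order_null (A : Type) (leA : A -> A -> Prop) (x : A -> F) : Prop :=
  exists (B : Type) (leB : B -> B -> Prop) (g : B -> F),
    directed leB /\ net_decr_to0 leB g /\
    forall b, exists a0, forall a, leA a0 a -> le (labs (x a)) (g b).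

Definition uo_null (A : Type) (leA : A -> A -> Prop) (x : A -> F) : Prop :=
  forall h, le 0 h -> order_null leA (fun a => lmeet (labs (x a)) h).

Definition uo_null_seq (x : nat -> F) : Prop := uo_null (fun m n => (m <= n)%N) x.

Definition disjoint_seq (f : nat -> F) : Prop :=
  forall n m, n <> m -> lmeet (labs (f n)) (labs (f m)) = 0.

Definition closed_subspace (E : set F) : Prop :=
  closed E /\ E 0 /\ (forall x y, E x -> E y -> E (x + y)) /\
  (forall (a : R) x, E x -> E (a *: x)).

Definition dispersed (E : set F) : Prop :=
  ~ exists (e f : nat -> F),
      (forall n, E (e n)) /\ (forall n, `|e n| = 1) /\ disjoint_seq f /\
      (fun n => `|e n - f n|) @ \oo --> (0 : R).

End BL.

(* Main.v *)
Require Import Defs.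
From mathcomp Require Import all_boot all_order all_algebra.
From mathcomp Require Import all_classical all_reals all_analysis.
Import Order.TTheory GRing.Theory Num.Theory.
Import numFieldNormedType.Exports.
Local Open Scope classical_set_scope.
Local Open Scope ring_scope.
Set Implicit Arguments. Unset Strict Implicit.

Section Riesz.
Variables (R : realType) (F : completeNormedModType R).
Variables (le : F -> F -> Prop) (join : F -> F -> F).
Hypothesis BL : banach_lattice le join.
Local Notation "x <=: y" := (le x y) (at level 70).
Local Notation ab := (@labs R F join).
Local Notation mt := (@lmeet R F join).

Lemma lrefl x : x <=: x. Proof. exact: (bl_refl BL). Qed.
Lemma ltr x y z : x <=: y -> y <=: z -> x <=: z. Proof. exact: (bl_trans BL). Qed.
Lemma lanti x y : x <=: y -> y <=: x -> x = y. Proof. exact: (bl_antisym BL). Qed.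
Lemma laddr x y z : x <=: y -> x + z <=: y + z. Proof. exact: (bl_add BL). Qed.
Lemma laddl x y z : x <=: y -> z + x <=: z + y.
Proof. by move=> H; rewrite ![z + _]addrC; apply: laddr. Qed.
Lemma ladd2 x y x' y' : x <=: y -> x' <=: y' -> x + x' <=: y + y'.
Proof. move=> H1 H2; apply: (ltr (laddr x' H1)); exact: laddl. Qed.
Lemma lsub x y : x <=: y -> 0 <=: y - x.
Proof. by move=> H; have := laddr (- x) H; rewrite subrr. Qed.
Lemma lsubr x y : 0 <=: y - x -> x <=: y.
Proof. by move=> H; have := laddr x H; rewrite add0r subrK. Qed.
Lemma lopp x y : x <=: y -> - y <=: - x.
Proof.
move=> H; have := laddr (- x - y) H.
by rewrite addrA subrr add0r addrCA subrr addr0.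
Qed.
Lemma lopp2 x y : - y <=: - x -> x <=: y.
Proof. by move/lopp; rewrite !opprK. Qed.
Lemma jl x y : x <=: join x y. Proof. exact: (bl_join_l BL). Qed.
Lemma jr x y : y <=: join x y. Proof. exact: (bl_join_r BL). Qed.
Lemma jlub x y z : x <=: z -> y <=: z -> join x y <=: z. Proof. exact: (bl_join_lub BL). Qed.
Lemma joinC x y : join x y = join y x.
Proof. by apply: lanti; apply: jlub; [apply: jr|apply: jl|apply: jr|apply: jl]. Qed.
Lemma join_id x y : x <=: y -> join x y = y.
Proof. by move=> H; apply: lanti; [apply: jlub => //; apply: lrefl|apply: jr]. Qed.
Lemma join_addr x y z : join (x + z) (y + z) = join x y + z.
Proof.
apply: lanti.
  by apply: jlub; apply: laddr; [apply: jl|apply: jr].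
set J := join (x + z) (y + z).
have H : join x y <=: J - z.
  apply: jlub.
    by have := laddr (- z) (jl (x + z) (y + z)); rewrite addrK.
  by have := laddr (- z) (jr (x + z) (y + z)); rewrite addrK.
by have := laddr z H; rewrite subrK.
Qed.
Lemma meet_l x y : mt x y <=: x.
Proof. by have := lopp (jl (- x) (- y)); rewrite opprK. Qed.
Lemma meet_r x y : mt x y <=: y.
Proof. by have := lopp (jr (- x) (- y)); rewrite opprK. Qed.
Lemma meet_glb z x y : z <=: x -> z <=: y -> z <=: mt x y.
Proof.
move=> H1 H2; apply: lopp2; rewrite /lmeet opprK.
by apply: jlub; apply: lopp.
Qed.
Lemma meetC x y : mt x y = mt y x. Proof. by rewrite /lmeet joinC. Qed.
Lemma sum_jm x y : x + y = join x y + mt x y.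
Proof.
have E := join_addr (- x) (- y) (x + y).
have E1 : - x + (x + y) = y by rewrite addKr.
have E2 : - y + (x + y) = x by rewrite addrC addrK.
rewrite E1 E2 joinC in E.
by rewrite /lmeet E (addrC (join _ _) (x + y)) addrK.
Qed.
Lemma labs_x x : x <=: ab x. Proof. exact: jl. Qed.
Lemma labs_nx x : - x <=: ab x. Proof. exact: jr. Qed.
Lemma labs_ge0 x : 0 <=: ab x.
Proof.
have H := ladd2 (labs_x x) (labs_nx x); rewrite subrr in H.
have h2 : (0:R) <= 2^-1 by rewrite invr_ge0.
have := bl_scale BL h2 H.
rewrite scaler0 (_ : ab x + ab x = (2:R) *: ab x); last by rewrite scaler_nat mulr2n.
by rewrite scalerA mulVf ?scale1r // pnatr_eq0.
Qed.
Lemma lnonpos p : 0 <=: p -> - p <=: 0.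
Proof. by move/lopp; rewrite oppr0. Qed.
Lemma labs_pos p : 0 <=: p -> ab p = p.
Proof. by move=> H; rewrite /labs joinC; apply: join_id; apply: ltr (lnonpos H) H. Qed.
Lemma labs_abs x : ab (ab x) = ab x. Proof. exact: labs_pos (labs_ge0 x). Qed.
Lemma labs_tri x y : ab (x + y) <=: ab x + ab y.
Proof.
apply: jlub; first by apply: ladd2; apply: labs_x.
by rewrite opprD; apply: ladd2; apply: labs_nx.
Qed.
Lemma meet_ge0 p q : 0 <=: p -> 0 <=: q -> 0 <=: mt p q.
Proof. exact: meet_glb. Qed.
Lemma meet_monor p a b : a <=: b -> mt p a <=: mt p b.
Proof. by move=> H; apply: meet_glb; [apply: meet_l|apply: ltr (meet_r _ _) H]. Qed.
Lemma meet_monol p a b : a <=: b -> mt a p <=: mt b p.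
Proof. by move=> H; rewrite ![mt _ p]meetC; apply: meet_monor. Qed.
Lemma meet_subadd p q r : 0 <=: p -> 0 <=: q -> 0 <=: r ->
  mt p (q + r) <=: mt p q + mt p r.
Proof.
move=> p0 q0 r0; set s := mt p (q + r).
have H : s - mt p q <=: mt p r.
  have -> : s - mt p q = join (- p + s) (- q + s).
    by rewrite /lmeet opprK addrC -join_addr.
  apply: jlub.
    apply: ltr (meet_ge0 p0 r0).
    by have := laddl (- p) (meet_l p (q + r)); rewrite addNr.
  apply: meet_glb.
    apply: ltr (meet_l p (q + r)); rewrite addrC.
    by have := laddl s (lnonpos q0); rewrite addr0.
  by have := laddl (- q) (meet_r p (q + r)); rewrite addKr.
by have := laddr (mt p q) H; rewrite subrK addrC.
Qed.
Lemma meet0 p : 0 <=: p -> mt p 0 = 0.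
Proof. by move=> p0; apply: lanti; [apply: meet_r|apply: meet_ge0 => //; apply: lrefl]. Qed.
Lemma disj_add p q r : 0 <=: p -> 0 <=: q -> 0 <=: r ->
  mt p q = 0 -> mt p r = 0 -> mt p (q + r) = 0.
Proof.
move=> p0 q0 r0 Hq Hr; apply: lanti.
  by have := meet_subadd p0 q0 r0; rewrite Hq Hr addr0.
by apply: meet_ge0 => //; have := ladd2 q0 r0; rewrite addr0.
Qed.
Lemma disj_mono p q d : 0 <=: p -> 0 <=: d -> d <=: q -> mt p q = 0 -> mt p d = 0.
Proof.
move=> p0 d0 dq H; apply: lanti; last exact: meet_ge0.
by rewrite -H; apply: meet_monor.
Qed.
Lemma disj_sum p q : mt p q = 0 -> p + q = join p q.
Proof. by move=> H; rewrite sum_jm H addr0. Qed.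

Lemma real_arch (r c : R) : 0 <= r -> (forall k : nat, k%:R * r <= c) -> r = 0.
Proof.
rewrite le0r => /orP[/eqP//|rpos] H; exfalso.
have := H (Num.trunc (c / r)).+1; rewrite -ler_pdivlMr // => H2.
by have := lt_le_trans (truncnS_gt (c / r)) H2; rewrite ltxx.
Qed.
Lemma mulrn_ge0 p k : 0 <=: p -> 0 <=: p *+ k.
Proof.
move=> p0; elim: k => [|k IH]; first by rewrite mulr0n; apply: lrefl.
by rewrite mulrS; have := ladd2 p0 IH; rewrite addr0.
Qed.
Lemma arch_zero p h : 0 <=: p -> (forall k, p *+ k <=: h) -> p = 0.
Proof.
move=> p0 H.
have h0 : 0 <=: h by have := H 0%N; rewrite mulr0n.
have N : forall k : nat, k%:R * `|p| <= `|h|.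
  move=> k; rewrite mulr_natl -normrMn; apply: (bl_norm BL).
  rewrite (labs_pos (mulrn_ge0 k p0)) (labs_pos h0); exact: H.
by apply/normr0_eq0; apply: real_arch N.
Qed.
Lemma cone_closed (s : nat -> F) c l : s @ \oo --> l ->
  (\forall n \near \oo, c <=: s n) -> c <=: l.
Proof.
move=> sl ev; set t := l - c; set ng := join (- t) 0.
have key : forall n, c <=: s n -> `|ng| <= `|s n - l|.
  move=> n cs; apply: (bl_norm BL); rewrite (labs_pos (jr _ _)).
  apply: jlub; last exact: labs_ge0.
  apply: ltr (labs_x _); apply: lsubr.
  have -> : s n - l - - t = s n - c by rewrite /t opprK addrA subrK.
  exact: lsub.
have Hl : forall e, 0 < e -> `|ng| < e.
  move=> e e0; near \oo => n.
  apply: (le_lt_trans (key n _)); first by near: n.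
  rewrite -normrN opprB; near: n; exact: cvgr_dist_lt.
have ng0 : ng = 0.
  apply/eqP; rewrite -normr_eq0; apply/negPn/negP => nz.
  have : (0 < `|ng|) by rewrite lt0r nz normr_ge0.
  by move/Hl; rewrite ltxx.
have tm : mt t 0 = 0 by rewrite /lmeet oppr0 -/ng ng0 oppr0.
have := sum_jm t 0; rewrite tm !addr0 => Et.
by apply: lsubr; rewrite -/t Et; apply: jr.
Unshelve. all: by end_near.
Qed.

Lemma disj_inf (x : nat -> F) h z : (forall n, 0 <=: x n) -> (forall n, x n <=: h) ->
  (forall i j, i <> j -> mt (x i) (x j) = 0) -> 0 <=: z ->
  (forall v, 0 <=: v -> (exists k, forall n, (k <= n)%N -> x n <=: v) -> z <=: v) ->
  z = 0.
Proof.
move=> x0 xh xd z0 zB.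
have G : forall k0 q, 0 <=: q -> q <=: h ->
    (forall n, (k0 <= n)%N -> mt (x n) q = 0) -> z + q <=: h.
  move=> k0 q q0 qh qd.
  have : z <=: h - q.
    apply: zB; first exact: lsub.
    exists k0 => n kn.
    have : x n + q <=: h by rewrite disj_sum ?qd //; apply: jlub.
    by move/(laddr (- q)); rewrite addrK.
  by move/(laddr q); rewrite subrK.
have S1 : forall j, mt z (x j) = 0.
  move=> j; set d := mt z (x j).
  have d0 : 0 <=: d by apply: meet_ge0.
  have dz : d <=: z by apply: meet_l.
  have dx : d <=: x j by apply: meet_r.
  have dnk : forall n m, n <> j -> mt (x n) (d *+ m) = 0.
    move=> n m nj; elim: m => [|m IH]; first by rewrite mulr0n meet0.
    rewrite mulrS; apply: disj_add => //; last exact: disj_mono (xd _ _ nj).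
    exact: mulrn_ge0.
  have dis : forall m n, (j.+1 <= n)%N -> mt (x n) (x j + d *+ m) = 0.
    move=> m n jn; have nj : n <> j by move=> E; rewrite E ltnn in jn.
    by apply: disj_add => //; [exact: mulrn_ge0|exact: xd|exact: dnk].
  have pos : forall m, 0 <=: x j + d *+ m.
    by move=> m; have := ladd2 (x0 j) (mulrn_ge0 m d0); rewrite addr0.
  have P : forall m, z + (x j + d *+ m) <=: h.
    elim=> [|m IH].
      by apply: (G j.+1) => //; [rewrite mulr0n addr0|exact: dis].
    apply: (G j.+1) => //; last exact: dis.
    apply: ltr IH; rewrite mulrS addrCA; exact: laddr.
  apply: (arch_zero d0) => m; apply: ltr (P m).
  by have := ladd2 z0 (ladd2 (x0 j) (lrefl (d *+ m))); rewrite !add0r.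
have nz : forall n k, mt (x n) (z *+ k) = 0.
  move=> n; elim=> [|k IH]; first by rewrite mulr0n meet0.
  rewrite mulrS; apply: disj_add => //; first exact: mulrn_ge0.
  by rewrite meetC.
apply: (arch_zero z0 (h := h)); elim=> [|k IH].
  by rewrite mulr0n; exact: ltr (x0 0%N) (xh 0%N).
rewrite mulrS; apply: (G 0%N) => //; first exact: mulrn_ge0.
Qed.

Lemma key (y a x : nat -> F) h U : 0 <=: h ->
  (forall n, 0 <=: y n) -> (forall n, y n <=: h) ->
  (forall n, 0 <=: a n) -> (forall n, 0 <=: x n) -> (forall n, x n <=: h) ->
  (forall i j, i <> j -> mt (x i) (x j) = 0) -> (forall n, y n <=: a n + x n) ->
  (forall n, ((2:R) ^+ n) *: a n <=: U) ->
  order_null le join (fun m n : nat => (m <= n)%N) y.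
Proof.
move=> h0 y0 yh a0 x0 xh xd yax aU.
pose P u := 0 <=: u /\ exists k, forall n, (k <= n)%N -> y n <=: u.
pose B := {u : F | P u}.
exists B, (fun u v : B => proj1_sig v <=: proj1_sig u), (fun u : B => proj1_sig u).
have U0 : 0 <=: U.
  by have := aU 0%N; rewrite expr0 scale1r => H; exact: ltr (a0 0%N) H.
split.
  split; first by move=> b; apply: lrefl.
  split; first by move=> u v w H1 H2; exact: ltr H2 H1.
  split.
    constructor; exists h; split => //; exists 0%N => n _; exact: yh.
  move=> [u [u0 [ku Hu]]] [v [v0 [kv Hv]]].
  have Pm : P (mt u v).
    split; first by apply: meet_ge0.
    exists (maxn ku kv) => n; rewrite geq_max => /andP[k1 k2].
    by apply: meet_glb; [apply: Hu|apply: Hv].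
  by exists (exist _ _ Pm) => /=; split; [apply: meet_l|apply: meet_r].
split.
  split; first by move=> u v H; exact: H.
  split; first by move=> b; exact: (proj1 (proj2_sig b)).
  move=> w Hw; set w' := join w 0.
  have Hw' : forall b : B, w' <=: proj1_sig b.
    move=> b; apply: jlub; first exact: Hw.
    exact: (proj1 (proj2_sig b)).
  have w'0 : 0 <=: w' by apply: jr.
  have bnd : forall k : nat, `|w'| <= ((2:R)^+k)^-1 * `|U|.
    move=> k; set u := ((2:R)^+k)^-1 *: U.
    have c0 : (0:R) <= ((2:R)^+k)^-1 by rewrite invr_ge0 exprn_ge0.
    have u0 : 0 <=: u by have := bl_scale BL c0 U0; rewrite scaler0.
    have ua : forall n, (k <= n)%N -> a n <=: u.
      move=> n kn.
      have e1 : a n = ((2:R)^+n)^-1 *: ((2:R)^+n *: a n).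
        by rewrite scalerA mulVf ?scale1r // expf_neq0.
      rewrite e1.
      have cn : (0:R) <= ((2:R)^+n)^-1 by rewrite invr_ge0 exprn_ge0.
      apply: ltr (bl_scale BL cn (aU n)) _.
      apply: lsubr; rewrite -scalerBl.
      have cd : (0:R) <= ((2:R)^+k)^-1 - ((2:R)^+n)^-1.
        rewrite subr_ge0 lef_pV2 ?ler_eXn2l // ?ltr1n //.
          by rewrite posrE exprn_gt0.
        by rewrite posrE exprn_gt0.
      by have := bl_scale BL cd U0; rewrite scaler0.
    have wu : w' <=: u.
      have z0 : join (w' - u) 0 = 0.
        apply: (disj_inf x0 xh xd (jr _ _)) => v v0 [k' Hk'].
        apply: jlub => //.
        have Pv : P (u + v).
          split; first by have := ladd2 u0 v0; rewrite addr0.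
          exists (maxn k k') => n; rewrite geq_max => /andP[k1 k2].
          apply: ltr (yax n) _; apply: ladd2; [exact: ua|exact: Hk'].
        have := Hw' (exist _ _ Pv) => /= H.
        by have := laddr (- u) H; rewrite (addrC u v) addrK.
      have := jl (w' - u) 0; rewrite z0 => H.
      by have := laddr u H; rewrite subrK add0r.
    have : `|w'| <= `|u|.
      by apply: (bl_norm BL); rewrite (labs_pos w'0) (labs_pos u0).
    by rewrite /u normrZ ger0_norm.
  have w'z : w' = 0.
    apply/normr0_eq0; apply: (real_arch (c := `|U|) (normr_ge0 _)) => k.
    have k2 : (k%:R : R) <= 2 ^+ k by rewrite -natrX ler_nat ltnW // ltn_expl.
    apply: le_trans (ler_wpM2r (normr_ge0 _) k2) _.
    by rewrite -ler_pdivlMl ?exprn_gt0.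
  by have := jl w 0; rewrite -/w' w'z.
by move=> [u [u0 [k Hk]]]; exists k => n kn /=; rewrite labs_pos //; exact: Hk.
Qed.

Lemma sum_ge0 (t : nat -> F) m : (forall k, 0 <=: t k) -> 0 <=: \sum_(0 <= k < m) t k.
Proof.
move=> t0; elim: m => [|m IH]; first by rewrite big_geq //; apply: lrefl.
by rewrite big_nat_recr //=; have := ladd2 IH (t0 m); rewrite addr0.
Qed.
Lemma sum_ge_term (t : nat -> F) m n : (forall k, 0 <=: t k) -> (n < m)%N ->
  t n <=: \sum_(0 <= k < m) t k.
Proof.
move=> t0; elim: m => [|m IH] //; rewrite big_nat_recr //= ltnS leq_eqVlt.
case/orP => [/eqP->|/IH h].
  by have := ladd2 (sum_ge0 m t0) (lrefl (t m)); rewrite add0r.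
apply: ltr h _; have := ladd2 (lrefl (\sum_(0 <= k < m) t k)) (t0 m).
by rewrite addr0.
Qed.
Lemma meet_subadd' p q r : 0 <=: p -> 0 <=: q -> 0 <=: r ->
  mt (q + r) p <=: mt q p + mt r p.
Proof. by move=> p0 q0 r0; rewrite !(meetC _ p); apply: meet_subadd. Qed.
End Riesz.

Theorem mainTheorem19 (R : realType) (F : completeNormedModType R)
  (le : F -> F -> Prop) (join : F -> F -> F) (E : set F) :
  @banach_lattice R F le join ->
  closed_subspace E ->
  (forall x : nat -> F, (forall n, E (x n)) -> @uo_null_seq R F le join x ->
     x @ \oo --> (0 : F)) ->
  @dispersed R F join E.
Proof.
move=> BL [Ecl [E0 [Eadd Escal]]] H [e [f [Ee [Ne [Df Cv]]]]].
pose eps n : R := ((2:R)^-1)^+n / (2:R)^+n.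
have eps0 n : 0 < eps n by rewrite divr_gt0 // exprn_gt0 // invr_gt0.
have HN : forall n, exists N, forall m, (N <= m)%N -> `|e m - f m| < eps n.
  move=> n; have := cvgr_dist_lt _ _ Cv _ (eps0 n); case=> N _ HN; exists N => m Nm.
  by have := HN m Nm; rewrite /= sub0r normrN ger0_norm.
have [Nf HNf] := choice HN.
pose phi := fix phi n := if n is n'.+1 then maxn (Nf n) (phi n').+1 else Nf 0%N.
have phiN n : (Nf n <= phi n)%N by case: n => [|n] //=; rewrite leq_max leqnn.
have phiS n : (phi n < phi n.+1)%N by rewrite /= leq_max ltnSn orbT.
have phimono : forall i j, (i < j)%N -> (phi i < phi j)%N.
  move=> i j; elim: j => [|j IH] //; rewrite ltnS leq_eqVlt.
  by case/orP => [/eqP->|/IH h]; [exact: phiS|exact: ltn_trans h (phiS j)].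
have phiinj : forall i j, i <> j -> phi i <> phi j.
  move=> i j ij Eij; case: (ltngtP i j) => [/phimono|/phimono|/eqP //].
    by rewrite Eij ltnn.
  by rewrite Eij ltnn.
have bd n : `|e (phi n) - f (phi n)| < eps n := HNf n (phi n) (phiN n).
pose x' n := e (phi n).
have uo : uo_null_seq le join x'.
  move=> h h0.
  pose a n := lmeet join (labs join (e (phi n) - f (phi n))) h.
  pose xx n := lmeet join (labs join (f (phi n))) h.
  pose t n := (2:R)^+n *: a n.
  have a0 n : le 0 (a n) by apply: (meet_ge0 BL) => //; apply: (labs_ge0 BL).
  have t0 n : le 0 (t n).
    by have := bl_scale BL (exprn_ge0 n (ler0n R 2)) (a0 n); rewrite scaler0.
  have na n : `|a n| <= `|e (phi n) - f (phi n)|.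
    apply: (bl_norm BL); rewrite (labs_pos BL (a0 n)).
    exact: (meet_l BL).
  have ts : cvgn (series t).
    apply: normed_cvg.
    apply: (series_le_cvg (u_ := fun n => `|t n|) (v_ := geometric 1 (2^-1))).
    - by move=> n.
    - by move=> n; rewrite /= mul1r exprn_ge0 // invr_ge0.
    - move=> n; rewrite /= mul1r /t normrZ ger0_norm ?exprn_ge0 //.
      apply: le_trans (ler_wpM2l (exprn_ge0 _ _) (le_trans (na n) (ltW (bd n)))) _.
        by [].
      by rewrite /eps mulrCA divff ?mulr1 // expf_neq0.
    - by apply: is_cvg_geometric_series; rewrite ger0_norm ?invr_ge0 // invf_lt1 // ltr1n.
  have [U HU] := (cvg_ex _).1 ts.
  have aU n : le (t n) U.
    apply: (cone_closed BL HU); near=> m.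
    apply: (sum_ge_term BL) => //; near: m.
    by exists n.+1.
  apply: (key BL (a := a) (x := xx) (U := U) h0).
  - by move=> n; apply: (meet_ge0 BL) => //; apply: (labs_ge0 BL).
  - by move=> n; apply: (meet_r BL).
  - exact: a0.
  - by move=> n; apply: (meet_ge0 BL) => //; apply: (labs_ge0 BL).
  - by move=> n; apply: (meet_r BL).
  - move=> i j ij; apply: (lanti BL); last first.
      by apply: (meet_ge0 BL); apply: (meet_ge0 BL) => //; apply: (labs_ge0 BL).
    rewrite -(Df (phi i) (phi j) (phiinj i j ij)).
    apply: (meet_glb BL).
      by apply: (ltr BL (meet_l BL _ _)); apply: (meet_l BL).
    by apply: (ltr BL (meet_r BL _ _)); apply: (meet_l BL).
  - move=> n.
    have En : x' n = (e (phi n) - f (phi n)) + f (phi n) by rewrite subrK.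
    apply: (ltr BL (meet_monol BL h (_ : le (labs join (x' n))
       (labs join (e (phi n) - f (phi n)) + labs join (f (phi n)))))).
      by rewrite {1}En; apply: (labs_tri BL).
    exact: (meet_subadd' BL h0 (labs_ge0 BL _) (labs_ge0 BL _)).
  - exact: aU.
have cv := H x' (fun n => Ee _) uo.
near \oo => n.
have : `|0 - x' n| < 1 by near: n; apply: cvgr_dist_lt.
by rewrite sub0r normrN /x' Ne ltxx.
Unshelve. all: by end_near.
Qed.
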